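(* Let $f\in P_{n,2k}$ be nonnegative on $\mathbb R^n$ and suppose $f(Ax)=f(x)$ for all $A\in J(n,v)$, for some $v\in\mathbb R^n$. Then $f$ is a sum of squares of forms (of degree $k$).
   Context: $P_{n,2k}$ is the space of real forms of degree $2k$ in $n$ variables. $J(n,v)=\{A\in SO(n):Av=v\}$. *)

(* Defs.v *)
From mathcomp Require Import all_boot all_order all_algebra.
From mathcomp Require Import reals.
From mathcomp Require Export mpoly.
Set Implicit Arguments. Unset Strict Implicit. Unset Printing Implicit Defensive.
Import Order.TTheory GRing.Theory Num.Theory.
Local Open Scope ring_scope.

Definition evalv (R : realType) (n : nat) (p : {mpoly R[n]}) (x : 'cV[R]_n) : R :=
  p.@[fun i => x i 0].

Definition is_form (R : realType) (n d : nat) (p : {mpoly R[n]}) : bool :=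
  p \is [in R[n], d.-homog].

Definition SO (R : realType) (n : nat) : pred 'M[R]_n :=
  fun A => (A *m A^T == 1%:M) && (\det A == 1).

Definition J (R : realType) (n : nat) (v : 'cV[R]_n) : pred 'M[R]_n :=
  fun A => SO A && (A *m v == v).

Definition sos_of_forms (R : realType) (n k : nat) (f : {mpoly R[n]}) : Prop :=
  exists s : seq {mpoly R[n]},
    (forall g, g \in s -> is_form k g) /\
    f = \sum_(g <- s) g ^+ 2.

(* Main.v *)
Require Import Defs.
From mathcomp Require Import all_boot all_order all_algebra.
From mathcomp Require Import reals.
From mathcomp Require Import mpoly.
From mathcomp Require Import polyrcf complex.
Import Order.TTheory GRing.Theory Num.Theory.
Local Open Scope ring_scope.
Set Implicit Arguments. Unset Strict Implicit. Unset Printing Implicit Defensive.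
From mathcomp Require Import ring zify.
Section Univ.
Variable R : rcfType.
Implicit Types (p q : {poly R}).

Lemma cont_right (g : {poly R}) (r : R) :
  (forall x, r < x -> 0 <= g.[x]) -> 0 <= g.[r].
Proof.
move=> H; rewrite leNgt; apply/negP => gr.
have e0 : 0 < - g.[r] by rewrite oppr_gt0.
have [d d0 Hd] := poly_cont r g e0.
have := Hd (r + d / 2%:R).
rewrite addrC addKr ger0_norm ?divr_ge0 ?ltW // ltr_pdivrMr ?ltr0n //.
rewrite ltr_pMr // ltr1n => /(_ isT).
have := H (r + d / 2%:R); rewrite ltrDl divr_gt0 ?ltr0n // => /(_ isT) h.
move=> /(le_lt_trans (ler_norm _)); rewrite ltrBlDr addNr; move=> h'.
by move: (lt_le_trans h' h); rewrite ltxx.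
Qed.

Lemma cont_left (g : {poly R}) (r : R) :
  (forall x, x < r -> 0 <= g.[x]) -> 0 <= g.[r].
Proof.
move=> H; rewrite leNgt; apply/negP => gr.
have e0 : 0 < - g.[r] by rewrite oppr_gt0.
have [d d0 Hd] := poly_cont r g e0.
have := Hd (r - d / 2%:R).
rewrite addrC addKr normrN ger0_norm ?divr_ge0 ?ltW // ltr_pdivrMr ?ltr0n //.
rewrite ltr_pMr // ltr1n => /(_ isT).
have := H (r - d / 2%:R); rewrite ltrBlDr ltrDl divr_gt0 ?ltr0n // => /(_ isT) h.
move=> /(le_lt_trans (ler_norm _)); rewrite ltrBlDr addNr; move=> h'.
by move: (lt_le_trans h' h); rewrite ltxx.
Qed.
End Univ.
Lemma natb s a q : (a.*2 <= q.+1 -> s <= a.+1 -> s.*2 <= (q + 2).+1)%N.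
Proof. lia. Qed.
Lemma natc s s1 s2 a b q : (a.*2 <= q.+1 -> b.*2 <= q.+1 -> s1 <= a.+1 -> s2 <= b ->
  s <= maxn s1 s2 -> s.*2 <= (q + 2).+1)%N.
Proof. lia. Qed.
Lemma natc2 s s1 s2 a b q : (a.*2 <= q.+1 -> b.*2 <= q.+1 -> s1 <= a -> s2 <= b.+1 ->
  s <= maxn s1 s2 -> s.*2 <= (q + 2).+1)%N.
Proof. lia. Qed.

Section Univ2.
Variable R : rcfType.
Local Notation rc := (@real_complex R).
Lemma szXa (a : R) : size ('X - a%:P) = 2%N. Proof. exact: size_XsubC. Qed.
Lemma szM1 (p : {poly R}) a : (size (p * ('X - a%:P))%R <= (size p).+1)%N.
Proof. by have := size_polyMleq p ('X - a%:P); rewrite szXa addn2. Qed.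
Lemma szMC (p : {poly R}) b : (size (p * b%:P)%R <= size p)%N.
Proof. by have := size_polyMleq p b%:P; have := size_polyC_leq1 b; lia. Qed.
Lemma szD (p q : {poly R}) : (size (p + q)%R <= maxn (size p) (size q))%N.
Proof. exact: size_polyD. Qed.
Lemma szB (p q : {poly R}) : (size (p - q)%R <= maxn (size p) (size q))%N.
Proof. by rewrite -(size_polyN q); exact: size_polyD. Qed.

Lemma sos2_gen N (p : {poly R}) : (size p <= N)%N -> (forall x, 0 <= p.[x]) ->
  exists a b : {poly R}, [/\ p = a ^+ 2 + b ^+ 2,
     ((size a).*2 <= (size p).+1)%N & ((size b).*2 <= (size p).+1)%N].
Proof.
elim: N p => [|N IH] p Hs Hp.
  move: Hs; rewrite leqn0 size_poly_eq0 => /eqP ->.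
  by exists 0, 0; rewrite !expr0n /= addr0 size_poly0.
have [Hs1|Hs2] := leqP (size p) 1.
  have pE := size1_polyC Hs1.
  have c0 : 0 <= p`_0 by have := Hp 0; rewrite {1}pE hornerC.
  have [c00|cn0] := eqVneq p`_0 0.
    exists 0, 0; rewrite !expr0n /= addr0 size_poly0; split => //.
    by rewrite pE c00.
  exists (Num.sqrt p`_0)%:P, 0; split.
  - by rewrite expr0n /= addr0 -rmorphXn /= sqr_sqrtr // -pE.
  - rewrite size_polyC sqrtr_eq0 -ltNge lt_def cn0 c0 /=.
    by rewrite pE size_polyC cn0.
  - by rewrite size_poly0.
have pn0 : p != 0 by rewrite -size_poly_eq0 -lt0n (ltn_trans _ Hs2).
pose pC := map_poly rc p.
have spC : size pC = size p by rewrite size_map_poly.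
have [z Hz] : exists z, root pC z by apply/closed_rootP; rewrite spC gtn_eqF.
case: z Hz => a b Hz.
have [b0|bn0] := eqVneq b 0.
-
  have Hra : root p a.
    move: Hz; rewrite b0 /root.
    have -> : (a +i* 0)%C = rc a by [].
    by rewrite horner_map /= => /eqP [->].
  have [q pq] := factor_theorem _ _ Hra.
  have qa0 : q.[a] = 0.
    apply/eqP; rewrite eq_le; apply/andP; split; last first.
      apply: cont_right => x ax.
      have := Hp x; rewrite pq hornerM hornerXsubC.
      by rewrite pmulr_lge0 // subr_gt0.
    rewrite -oppr_ge0 -hornerN; apply: cont_left => x xa.
    have := Hp x; rewrite pq hornerM hornerXsubC hornerN.
    by rewrite -mulrNN pmulr_lge0 // oppr_gt0 subr_lt0.
  have [q2 qq2] := factor_theorem q a (introT eqP qa0).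
  have pE : p = q2 * ('X - a%:P) ^+ 2 by rewrite pq qq2 -mulrA -expr2.
  have q2n0 : q2 != 0 by apply: contraNneq pn0; rewrite pE => ->; rewrite mul0r.
  have sp : size p = (size q2 + 2)%N.
    by rewrite pE size_mul ?expf_neq0 ?polyXsubC_eq0 // size_exp_XsubC addnS.
  have Hq2 : forall x, 0 <= q2.[x].
    have H1 : forall x, x != a -> 0 <= q2.[x].
      move=> x xa; have := Hp x; rewrite pE hornerM horner_exp hornerXsubC.
      by rewrite pmulr_lge0 // exprn_even_gt0 //= subr_eq0 xa.
    move=> x; have [->|xa] := eqVneq x a; last exact: H1.
    by apply: cont_right => y ay; apply: H1; rewrite gt_eqF.
  have sq2 : (size q2 <= N)%N by move: Hs; rewrite sp; lia.
  have [a1 [b1 [E1 sa sb]]] := IH q2 sq2 Hq2.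
  exists (a1 * ('X - a%:P)), (b1 * ('X - a%:P)); split.
  + by rewrite pE E1 !exprMn mulrDl.
  + by rewrite sp; exact: natb sa (szM1 a1 a).
  + by rewrite sp; exact: natb sb (szM1 b1 a).
-
  pose Q : {poly R} := ('X - a%:P) ^+ 2 + (b ^+ 2)%:P.
  have sQ : size Q = 3%N.
    rewrite /Q size_polyDl size_exp_XsubC // size_polyC.
    by case: (_ != 0).
  have Qn0 : Q != 0 by rewrite -size_poly_eq0 sQ.
  have Qpos : forall x, 0 < Q.[x].
    move=> x; rewrite /Q hornerD horner_exp hornerXsubC hornerC.
    apply: ltr_wpDl; first exact: sqr_ge0.
    by rewrite exprn_even_gt0 //= bn0 orbT.
  have QCz : forall w : R[i], w \in [:: (a +i* b)%C; (a +i* b)^*%C] ->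
      (map_poly rc Q).[w] = 0.
    move=> w; rewrite !inE => /orP [] /eqP ->;
      rewrite /Q rmorphD rmorphXn /= rmorphB /= map_polyX !map_polyC /=
        hornerD horner_exp hornerXsubC hornerC /=; simpc;
      by rewrite expr2 ?addNr ?mulrN ?opprK ?addNr.
  have pCz : forall w : R[i], w \in [:: (a +i* b)%C; (a +i* b)^*%C] ->
      pC.[w] = 0.
    move=> w; rewrite !inE => /orP [] /eqP ->; apply/eqP; first exact: Hz.
    rewrite -/(root pC _) -complex_root_conj.
    suff -> : map_poly conjc pC = pC by [].
    by rewrite /pC -map_poly_comp; apply: eq_map_poly => x; exact: conjc_real.
  have rem0 : p %% Q = 0.
    apply/eqP; rewrite -(map_poly_eq0 rc); apply/negPn/negP => rn0.
    have := max_poly_roots rn0 (rs := [:: (a +i* b)%C; (a +i* b)^*%C]).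
    rewrite size_map_poly.
    have -> : all (root (map_poly rc (p %% Q))) [:: (a +i* b)%C; (a +i* b)^*%C].
      apply/allP => w ww; rewrite /root.
      have -> : p %% Q = p - (p %/ Q) * Q by rewrite {2}(divp_eq p Q) addrC addKr.
      by rewrite rmorphB rmorphM /= hornerD hornerN hornerM (pCz _ ww) (QCz _ ww) mulr0 subr0.
    have -> : uniq [:: (a +i* b)%C; (a +i* b)^*%C].
      rewrite /= andbT inE; apply/eqP => -[] /eqP.
      by rewrite -addr_eq0 -mulr2n mulrn_eq0 /= (negPf bn0).
    move=> /(_ isT isT); have := ltn_modp p Q; rewrite Qn0 sQ /=.
    by move=> h1 h2; move: (leq_trans h2 h1).
  set q := p %/ Q.
  have pE : p = q * Q by rewrite {1}(divp_eq p Q) rem0 addr0.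
  have qn0 : q != 0 by apply: contraNneq pn0; rewrite pE => ->; rewrite mul0r.
  have sp : size p = (size q + 2)%N by rewrite pE size_mul // sQ addnS.
  have Hq : forall x, 0 <= q.[x].
    by move=> x; have := Hp x; rewrite pE hornerM pmulr_lge0.
  have sq : (size q <= N)%N by move: Hs; rewrite sp; lia.
  have [a1 [b1 [E1 sa sb]]] := IH q sq Hq.
  exists (a1 * ('X - a%:P) - b1 * b%:P), (a1 * b%:P + b1 * ('X - a%:P)); split.
  + rewrite pE E1 /Q rmorphXn /=; ring.
  + rewrite sp; exact: natc sa sb (szM1 a1 a) (szMC b1 b) (szB _ _).
  + rewrite sp; exact: natc2 sa sb (szMC a1 b) (szM1 b1 a) (szD _ _).
Qed.
End Univ2.
Lemma digits_inj N n (f g : 'I_n -> nat) : (forall i, f i < N)%N -> (forall i, g i < N)%N ->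
  (\sum_(i < n) N ^ i * f i)%N = (\sum_(i < n) N ^ i * g i)%N -> f =1 g.
Proof.
elim: n f g => [|n IH] f g Hf Hg.
  by move=> _ [].
rewrite !big_ord_recl /= !expn0 !mul1n.
have N0 : (0 < N)%N by have := Hf ord0; case: (N).
have E : forall h : 'I_n.+1 -> nat, (\sum_(i < n) N ^ (bump 0 i) * h (lift ord0 i) =
    N * \sum_(i < n) N ^ i * h (lift ord0 i))%N.
  by move=> h; rewrite big_distrr /=; apply: eq_bigr => i _; rewrite /bump /= add1n expnS mulnA.
rewrite !E => H.
have H0 : f ord0 = g ord0.
  have := congr1 (fun x => x %% N)%N H => /=.
  by rewrite !(addnC (f _)) !(addnC (g _)) !(mulnC N) !modnMDl !modn_small.
move: H; rewrite H0 => /addnI /eqP; rewrite eqn_pmul2l // => /eqP H.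
have := IH (fun i => f (lift ord0 i)) (fun i => g (lift ord0 i)) (fun i => Hf _) (fun i => Hg _) H.
move=> Hl i; case: (unliftP ord0 i) => [j ->|->] //; exact: Hl.
Qed.

Section Ident.
Variable R : realType.

Lemma poly_all_roots (Q : {poly R}) : (forall t, Q.[t] = 0) -> Q = 0.
Proof.
move=> H; apply/eqP/negPn/negP => Qn0.
set rs := [seq i%:R | i <- iota 0 (size Q)] : seq R.
have h1 : all (root Q) rs by apply/allP => x _; apply/eqP/H.
have h2 : uniq rs.
  rewrite map_inj_uniq ?iota_uniq //; move=> i j /eqP; rewrite eqr_nat => /eqP //.
by have := max_poly_roots Qn0 h1 h2; rewrite size_map size_iota ltnn.
Qed.

Lemma mpoly_eq0 n (p : {mpoly R[n]}) : (forall x : 'I_n -> R, p.@[x] = 0) -> p = 0.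
Proof.
move=> H.
pose N := msize p.
pose e (m : 'X_{1..n}) := (\sum_(i < n) N ^ i * m i)%N.
pose Q : {poly R} := \sum_(m <- msupp p) p@_m *: 'X^(e m).
have HQ : Q = 0.
  apply: poly_all_roots => t.
  rewrite -(H (fun i => t ^+ (N ^ i))) mevalE /Q horner_sum; apply: eq_bigr => m _.
  rewrite hornerZ hornerXn; congr (_ * _).
  rewrite /e -prodrXr; apply: eq_bigr => i _; by rewrite exprM.
have lt m : m \in msupp p -> forall i, (m i < N)%N.
  move=> /msize_mdeg_lt Hm i; apply: leq_ltn_trans Hm.
  by rewrite mdegE (bigD1 i) //= leq_addr.
apply/mpolyP => m0; rewrite mcoeff0.
have [Hm0|Hm0] := boolP (m0 \in msupp p); last exact: memN_msupp_eq0.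
have := congr1 (fun q : {poly R} => q`_(e m0)) HQ; rewrite coef0 /Q coef_sum.
rewrite (bigD1_seq m0) ?msupp_uniq //= coefZ coefXn eqxx mulr1 big1 ?addr0 //.
move=> m mm0; rewrite coefZ coefXn.
have [Hm|Hm] := boolP (m \in msupp p); last by rewrite memN_msupp_eq0 // mul0r.
case: eqP; last by rewrite mulr0.
move=> /esym /digits_inj; move=> /(_ (lt _ Hm) (lt _ Hm0)) Heq.
by move: mm0; rewrite (mnmP m m0).2 // eqxx.
Qed.
End Ident.
Section Homog.
Variable R : realType.

Lemma homog_scale n d (f : {mpoly R[n]}) (c : R) (x : 'I_n -> R) :
  f \is d.-homog -> f.@[fun i => c * x i] = c ^+ d * f.@[x].
Proof.
move=> /dhomogP Hf; rewrite !mevalE big_distrr /=.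
apply: eq_big_seq => m Hm; rewrite mulrCA; congr (_ * _).
rewrite -(Hf m Hm).
have -> : c ^+ mdeg m = \prod_(i < n) c ^+ m i.
  by rewrite prodrXr; congr (_ ^+ _); exact: (mdegE m).
by rewrite -big_split /=; apply: eq_bigr => i _; rewrite exprMn.
Qed.
End Homog.

Section Geom.
Variable R : realType.
Variable n : nat.
Implicit Types (x y u w : 'cV[R]_n).

Definition dot x y : R := \sum_i x i 0 * y i 0.

Lemma dotC x y : dot x y = dot y x.
Proof. by apply: eq_bigr => i _; rewrite mulrC. Qed.
Lemma dotBl x y z : dot (x - y) z = dot x z - dot y z.
Proof. by rewrite /dot -sumrB; apply: eq_bigr => i _; rewrite !mxE mulrBl. Qed.
Lemma dotDl x y z : dot (x + y) z = dot x z + dot y z.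
Proof. by rewrite /dot -big_split; apply: eq_bigr => i _; rewrite !mxE mulrDl. Qed.
Lemma dotZl c x z : dot (c *: x) z = c * dot x z.
Proof. by rewrite /dot big_distrr; apply: eq_bigr => i _; rewrite !mxE /= mulrA. Qed.
Lemma dotBr x y z : dot z (x - y) = dot z x - dot z y.
Proof. by rewrite !(dotC z) dotBl. Qed.
Lemma dotDr x y z : dot z (x + y) = dot z x + dot z y.
Proof. by rewrite !(dotC z) dotDl. Qed.
Lemma dotZr c x z : dot z (c *: x) = c * dot z x.
Proof. by rewrite !(dotC z) dotZl. Qed.
Lemma dot_ge0 x : 0 <= dot x x.
Proof. by apply: sumr_ge0 => i _; rewrite -expr2 sqr_ge0. Qed.
Lemma dot_eq0 x : (dot x x == 0) = (x == 0).
Proof.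
apply/idP/idP; last by move/eqP ->; rewrite /dot big1 // => i _; rewrite mxE mul0r.
rewrite /dot psumr_eq0; last by move=> i _; rewrite -expr2 sqr_ge0.
move=> /allP H; apply/eqP/matrixP => i j; rewrite ord1 mxE.
by have := H i (mem_index_enum i); rewrite -expr2 sqrf_eq0 => /eqP.
Qed.
Lemma dot_mx x y : x^T *m y = (dot x y)%:M.
Proof.
rewrite [LHS]mx11_scalar; congr (_%:M).
by rewrite !mxE; apply: eq_bigr => i _; rewrite !mxE.
Qed.

Definition Hh w : 'M[R]_n := 1%:M - (2 / dot w w) *: (w *m w^T).

Lemma Hh_mul w x : Hh w *m x = x - (2 * dot w x / dot w w) *: w.
Proof.
rewrite /Hh mulmxBl mul1mx -scalemxAl -mulmxA dot_mx mul_mx_scalar scalerA.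
by rewrite mulrAC.
Qed.

Lemma Hh_tr w : (Hh w)^T = Hh w.
Proof. by rewrite /Hh linearB /= trmx1 linearZ /= trmx_mul trmxK. Qed.

Lemma Hh_invol w : w != 0 -> Hh w *m Hh w = 1%:M.
Proof.
move=> wn0; have dn0 : dot w w != 0 by rewrite dot_eq0.
set P := w *m w^T; set c := 2 / dot w w.
have PP : P *m P = dot w w *: P.
  by rewrite /P mulmxA -(mulmxA w) dot_mx mul_mx_scalar -scalemxAl.
have cc : c * c * dot w w = c + c.
  by rewrite /c; field.
rewrite /Hh -/P -/c mulmxBl mul1mx mulmxBr mulmx1 -scalemxAl -scalemxAr PP !scalerA cc.
apply/matrixP => i j; rewrite !mxE; ring.
Qed.

Lemma det_lemma (a : 'cV[R]_n) (b : 'rV[R]_n) : \det (1%:M + a *m b) = 1 + (b *m a) 0 0.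
Proof.
pose M := block_mx 1%:M (- a) b (1%:M : 'M_1).
have E1 : M = block_mx 1%:M 0 b 1%:M *m block_mx 1%:M (- a) 0 (1%:M + b *m a).
  rewrite mulmx_block ?mul1mx ?mul0mx ?mulmx0 ?mulmx1 ?addr0 ?add0r ?mulmxN ?mulNmx.
  by rewrite ?addrK // addrC addrK.
have E2 : M = block_mx (1%:M + a *m b) (- a) 0 1%:M *m block_mx 1%:M 0 b 1%:M.
  rewrite mulmx_block ?mul1mx ?mul0mx ?mulmx0 ?mulmx1 ?addr0 ?add0r ?mulmxN ?mulNmx.
  by rewrite ?addrK // addrC addrK.
have := congr1 determinant E1; rewrite {1}E2 !det_mulmx.
by rewrite det_ublock det_lblock det_ublock !det1 !mul1r !mulr1 det_mx11 !mxE /= => ->.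
Qed.

Lemma Hh_det w : w != 0 -> \det (Hh w) = -1.
Proof.
move=> wn0; have dn0 : dot w w != 0 by rewrite dot_eq0.
have -> : Hh w = 1%:M + w *m (- (2 / dot w w) *: w^T).
  by rewrite /Hh -scalemxAr scaleNr.
rewrite det_lemma -scalemxAl mxE dot_mx mxE eqxx mulr1n.
by rewrite mulNr -mulrA mulVf // mulr1; ring.
Qed.
End Geom.
Section Geom2.
Variable R : realType.
Variable n : nat.
Implicit Types (x y u w : 'cV[R]_n).

Lemma dot_of x y : dot x y = (x^T *m y) 0 0.
Proof. by rewrite dot_mx mxE eqxx mulr1n. Qed.

Lemma perp_exists u y : (2 < n)%N -> exists w, [/\ w != 0, dot w u = 0 & dot w y = 0].
Proof.
move=> Hn.
pose M := row_mx u y.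
pose K := kermx M.
have Kn0 : K != 0.
  rewrite -mxrank_eq0 /K mxrank_ker.
  have := rank_leq_col M; rewrite -subn_eq0; lia.
have [i Hi] : exists i, row i K != 0.
  apply/existsP; apply: contraR Kn0 => /existsPn H; apply/eqP/row_matrixP => i.
  by rewrite row0; apply/eqP; have := H i; rewrite negbK.
exists (row i K)^T; rewrite trmx_eq0 Hi !dot_of trmxK.
have : row i K *m M = 0 by rewrite -row_mul mulmx_ker row0.
rewrite mul_mx_row -row_mx0 => /eq_row_mx [].
by move=> -> ->; rewrite !mxE.
Qed.

Lemma SO1 : SO (1%:M : 'M[R]_n).
Proof. by rewrite /SO trmx1 mulmx1 det1 !eqxx. Qed.

Lemma rot_exists u x y : (2 < n)%N -> dot x x = dot y y -> dot u x = dot u y ->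
  exists A : 'M[R]_n, [/\ SO A, A *m u = u & A *m x = y].
Proof.
move=> Hn Hxy Hu.
have [<-|xy] := eqVneq x y; first by exists 1%:M; rewrite SO1 !mul1mx.
set d := x - y.
have dn0 : d != 0 by rewrite subr_eq0.
have [w [wn0 wu wy]] := perp_exists u y Hn.
exists (Hh w *m Hh d); split.
- rewrite /SO trmx_mul !Hh_tr -mulmxA (mulmxA (Hh d)) Hh_invol // mul1mx Hh_invol //.
  by rewrite det_mulmx !Hh_det // mulrNN mulr1 !eqxx.
- have du : dot d u = 0 by rewrite /d dotBl !(dotC _ u) Hu subrr.
  by rewrite -mulmxA (Hh_mul d) du mulr0 mul0r scale0r subr0 Hh_mul wu mulr0 mul0r scale0r subr0.
- have ddn0 : dot d d != 0 by rewrite dot_eq0.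
  have E : 2 * dot d x / dot d d = 1.
    have E2 : dot d d = 2 * dot d x.
      rewrite /d !(dotBl, dotBr) Hxy (dotC x y); ring.
    by rewrite -E2 divff.
  by rewrite -mulmxA (Hh_mul d) E scale1r /d opprB addrC subrK Hh_mul wy mulr0 !mul0r scale0r subr0.
Qed.
End Geom2.
Lemma ltn_pred_le a b : (a < b -> a <= b.-1)%N. Proof. by case: b. Qed.

Section Helpers.
Variable R : realType.

Lemma size_prod_le (I : Type) (r : seq I) (F : I -> {poly R}) :
  (size (\prod_(j <- r) F j)%R <= (\sum_(j <- r) (size (F j)).-1).+1)%N.
Proof.
elim: r => [|a r IH]; first by rewrite !big_nil size_poly1.
rewrite !big_cons; apply: leq_trans (size_polyMleq _ _) _.
move: IH; set s := size (\prod_(j <- r) F j)%R; set t := size (F a); lia.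
Qed.

Variable n : nat.

Definition lineP (f : {mpoly R[n]}) (w u : 'I_n -> R) : {poly R} :=
  \sum_(m <- msupp f) f@_m *: \prod_(i < n) (w i *: 'X + (u i)%:P) ^+ m i.

Lemma lineP_eval f w u a : (lineP f w u).[a] = f.@[fun i => a * w i + u i].
Proof.
rewrite mevalE /lineP horner_sum; apply: eq_bigr => m _.
rewrite hornerZ horner_prod; congr (_ * _); apply: eq_bigr => i _.
by rewrite horner_exp hornerD hornerZ hornerX hornerC mulrC.
Qed.

Lemma lineP_size f w u d : f \is d.-homog -> (size (lineP f w u) <= d.+1)%N.
Proof.
move=> /dhomogP Hf; rewrite /lineP; apply: leq_trans (size_sum _ _ _) _.
apply/bigmax_leqP_seq => m Hm _; apply: leq_trans (size_scale_leq _ _) _.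
apply: leq_trans (size_prod_le _ _) _; rewrite ltnS -(Hf m Hm).
apply: (leq_trans _ (eq_leq (esym (mdegE m)))).
apply: leq_sum => i _.
have h1 := size_poly_exp_leq (w i *: 'X + (u i)%:P) (m i).
have h2 : (size (w i *: 'X + (u i)%:P)%R <= 2)%N.
  apply: leq_trans (size_polyD _ _) _; rewrite geq_max (leq_trans (size_polyC_leq1 _)) // andbT.
  by apply: leq_trans (size_scale_leq _ _) _; rewrite size_polyX.
move: h1 h2; set s := size (w i *: 'X + (u i)%:P)%R; set t := size _; nia.
Qed.

Definition hz (q : {poly R}) (Y T : {mpoly R[n]}) (w d : nat) : {mpoly R[n]} :=
  \sum_(j < size q) q`_j *: (Y ^+ j * T ^+ (d - w * j)%N).

Lemma hz_eval (q : {poly R}) (Y T : {mpoly R[n]}) (w d : nat) (x : 'I_n -> R) : T.@[x] != 0 -> (w * (size q).-1 <= d)%N ->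
  (hz q Y T w d).@[x] = T.@[x] ^+ d * q.[Y.@[x] / T.@[x] ^+ w].
Proof.
move=> Tn0 Hs; rewrite horner_coef /hz raddf_sum big_distrr /=; apply: eq_bigr => j _.
rewrite mevalZ mevalM !rmorphXn /=.
have hj : (w * j <= d)%N.
  apply: leq_trans Hs; apply: leq_mul => //; apply: ltn_pred_le; exact: ltn_ord.
rewrite exprB // ?unitfE ?expf_neq0 // exprMn exprVn -exprM.
by ring.
Qed.

Lemma hz_homog (q : {poly R}) (Y T : {mpoly R[n]}) (w d : nat) : Y \is w.-homog -> T \is 1.-homog -> (w * (size q).-1 <= d)%N ->
  hz q Y T w d \is d.-homog.
Proof.
move=> HY HT Hs; rewrite /hz; apply: rpred_sum => j _; apply: rpredZ.
have hj : (w * j <= d)%N.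
  apply: leq_trans Hs; apply: leq_mul => //; apply: ltn_pred_le; exact: ltn_ord.
have := dhomogM (dhomogMn j HY) (dhomogMn (d - w * j)%N HT).
by rewrite mul1n subnKC.
Qed.

Lemma eval_sos (f : {mpoly R[n]}) (s : seq {mpoly R[n]}) :
  (forall x, f.@[x] = \sum_(g <- s) g.@[x] ^+ 2) -> f = \sum_(g <- s) g ^+ 2.
Proof.
move=> H; apply/eqP; rewrite -subr_eq0; apply/eqP; apply: mpoly_eq0 => x; rewrite mevalB.
have -> : (\sum_(g <- s) g ^+ 2).@[x] = \sum_(g <- s) g.@[x] ^+ 2.
  by rewrite rmorph_sum; apply: eq_bigr => g _; rewrite rmorphXn.
by rewrite H subrr.
Qed.

Lemma eval_sos_on (T f : {mpoly R[n]}) (s : seq {mpoly R[n]}) : T != 0 ->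
  (forall x, T.@[x] != 0 -> f.@[x] = \sum_(g <- s) g.@[x] ^+ 2) -> f = \sum_(g <- s) g ^+ 2.
Proof.
move=> Tn0 H; apply/eqP; rewrite -subr_eq0.
suff : T * (f - \sum_(g <- s) g ^+ 2) == 0 by rewrite mulf_eq0 (negPf Tn0).
apply/eqP; apply: mpoly_eq0 => x; rewrite mevalM mevalB.
have -> : (\sum_(g <- s) g ^+ 2).@[x] = \sum_(g <- s) g.@[x] ^+ 2.
  by rewrite rmorph_sum; apply: eq_bigr => g _; rewrite rmorphXn.
have [Tx|Tx] := eqVneq T.@[x] 0; first by rewrite Tx mul0r.
by rewrite H // subrr mulr0.
Qed.
End Helpers.
Section Case3.
Variable R : realType.

Lemma even_split (q : {poly R}) a :
  q.[a] = (even_poly q).[a ^+ 2] + (odd_poly q).[a ^+ 2] * a.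
Proof.
by rewrite -{1}(poly_even_odd q) hornerD hornerM hornerX !horner_comp hornerXn.
Qed.

Lemma even_sos (P q1 q2 : {poly R}) a : (forall a, P.[- a] = P.[a]) -> P = q1 ^+ 2 + q2 ^+ 2 ->
  P.[a] = ((even_poly q1).[a ^+ 2] ^+ 2 + a ^+ 2 * (odd_poly q1).[a ^+ 2] ^+ 2) +
          ((even_poly q2).[a ^+ 2] ^+ 2 + a ^+ 2 * (odd_poly q2).[a ^+ 2] ^+ 2).
Proof.
move=> Hev HP.
have -> : P.[a] = (P.[a] + P.[- a]) / 2 by rewrite Hev; field.
rewrite HP !hornerD !horner_exp !(even_split q1) !(even_split q2) sqrrN.
by field.
Qed.

Variable n : nat.
Implicit Types (x y u w : 'cV[R]_n).

Lemma dot_lin u w a b : dot u u = 1 -> dot w w = 1 -> dot w u = 0 ->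
  dot (a *: w + b *: u) (a *: w + b *: u) = a ^+ 2 + b ^+ 2.
Proof.
move=> uu ww wu; rewrite !(dotDl, dotDr, dotZl, dotZr) uu ww wu (dotC u w) wu.
by ring.
Qed.

Lemma dot_lin2 u w a b : dot u u = 1 -> dot w u = 0 -> dot u (a *: w + b *: u) = b.
Proof.
by move=> uu wu; rewrite !(dotDr, dotZr) uu (dotC u w) wu mulr0 add0r mulr1.
Qed.

End Case3.
Lemma natd a p k : (a.*2 <= p.+1 -> p <= (2 * k).+1 -> a <= k.+1)%N.
Proof. lia. Qed.

Lemma nate o s k : (o <= s./2 -> s <= k.+1 -> 2 * o.-1 <= k.-1)%N.
Proof. lia. Qed.

Lemma meval_sum (R : realType) n (x : 'I_n -> R) I (r : seq I) (F : I -> {mpoly R[n]}) :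
  (\sum_(i <- r) F i).@[x] = \sum_(i <- r) (F i).@[x].
Proof. exact: raddf_sum. Qed.
Lemma meval_exp (R : realType) n (x : 'I_n -> R) (p : {mpoly R[n]}) e :
  (p ^+ e).@[x] = p.@[x] ^+ e.
Proof. exact: rmorphXn. Qed.

Section Case3b.
Variable R : realType.

Lemma case3 n k (f : {mpoly R[n]}) (u w : 'cV[R]_n) :
  f \is (2 * k).-homog ->
  (forall x, 0 <= f.@[x]) ->
  dot u u = 1 -> dot w w = 1 -> dot w u = 0 ->
  (forall x y, dot x x = dot y y -> dot u x = dot u y -> evalv f x = evalv f y) ->
  sos_of_forms k f.
Proof.
move=> Hf Hnn uu ww wu Hinv.
pose wf i := w i 0; pose uf i := u i 0.
pose P := lineP f wf uf.
have HPe : forall a, P.[a] = evalv f (a *: w + u).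
  by move=> a; rewrite lineP_eval /evalv; apply: meval_eq => i; rewrite !mxE.
have HP0 : forall a, 0 <= P.[a] by move=> a; rewrite lineP_eval.
have HPev : forall a, P.[- a] = P.[a].
  move=> a; rewrite !HPe.
  have E : forall c, c *: w + u = c *: w + 1 *: u by move=> c; rewrite scale1r.
  by apply: Hinv; rewrite !E ?dot_lin ?dot_lin2 // sqrrN.
have sP : (size P <= (2 * k).+1)%N := lineP_size wf uf Hf.
have [q1 [q2 [HPq s1 s2]]] := sos2_gen (leqnn (size P)) HP0.
have sq1 : (size q1 <= k.+1)%N := natd s1 sP.
have sq2 : (size q2 <= k.+1)%N := natd s2 sP.
pose T : {mpoly R[n]} := \sum_i u i 0 *: 'X_i.
pose S : {mpoly R[n]} := \sum_i 'X_i ^+ 2 - T ^+ 2.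
have HX : forall i : 'I_n, ('X_i : {mpoly R[n]}) \is 1.-homog.
  by move=> i; rewrite dhomogX; apply/eqP; exact: mdeg1.
have HT : T \is 1.-homog.
  by apply: rpred_sum => i _; apply: rpredZ; exact: HX.
have HS : S \is 2.-homog.
  apply: rpredB; last exact: (dhomogMn 2 HT).
  by apply: rpred_sum => i _; exact: (dhomogMn 2 (HX i)).
pose G q := hz (even_poly q) S T 2 k.
pose H q l := ('X_l - u l 0 *: T) * hz (odd_poly q) S T 2 k.-1.
have HG : forall q : {poly R}, (size q <= k.+1)%N -> is_form k (G q).
  move=> q sq; apply: hz_homog => //.
  by have := size_even_poly q; move: sq; lia.
have Hodd0 : forall q : {poly R}, (size q <= 1)%N -> odd_poly q = 0.
  move=> q sq; apply/eqP; rewrite -size_poly_eq0 -leqn0.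
  by apply: leq_trans (size_odd_poly q) _; move: sq; lia.
have HH : forall q : {poly R}, (size q <= k.+1)%N -> forall l, is_form k (H q l).
  move=> q sq l; have [k0|kp] := posnP k.
    have sq' : (size q <= 1)%N by move: sq; rewrite k0.
    by rewrite /H (Hodd0 q sq') /hz size_poly0 big_ord0 mulr0; exact: rpred0.
  have -> : k = (1 + k.-1)%N by rewrite add1n prednK.
  apply: dhomogM; first by apply: rpredB; [exact: HX | apply: rpredZ].
  apply: hz_homog => //=.
  exact: nate (size_odd_poly q) sq.
pose s := [:: G q1; G q2] ++ (map (H q1) (index_enum 'I_n) ++ map (H q2) (index_enum 'I_n)).
exists s; split.
  move=> g; rewrite !mem_cat !inE => /orP [/orP [] /eqP -> | /orP [] /mapP [l _ ->]].
  - exact: HG.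
  - exact: HG.
  - exact: HH.
  - exact: HH.
have Tn0 : T != 0.
  apply/eqP => T0; have := congr1 (meval uf) T0; rewrite meval0.
  rewrite rmorph_sum /=.
  under eq_bigr do rewrite mevalZ mevalXU.
  move=> /esym; rewrite -/(dot u u) uu => /eqP; by rewrite eq_sym oner_eq0.
apply: (eval_sos_on Tn0) => x Tx.
pose xc : 'cV[R]_n := \col_i x i.
set t := T.@[x].
have Ht : t = dot u xc.
  rewrite /t meval_sum /dot; apply: eq_bigr => i _.
  by rewrite mevalZ mevalXU !mxE.
have Hxx : \sum_i x i ^+ 2 = dot xc xc.
  by rewrite /dot; apply: eq_bigr => i _; rewrite !mxE expr2.
set sx := S.@[x].
have Hsx : sx = dot xc xc - t ^+ 2.
  rewrite /sx mevalB meval_sum meval_exp -Hxx; congr (_ - _).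
  by apply: eq_bigr => i _; rewrite meval_exp mevalXU.
have Hsx2 : sx = dot (xc - t *: u) (xc - t *: u).
  rewrite Hsx !(dotBl, dotBr, dotZl, dotZr) uu (dotC xc u) -Ht; ring.
have sx0 : 0 <= sx by rewrite Hsx2 dot_ge0.
have fx : f.@[x] = evalv f xc by rewrite /evalv; apply: meval_eq => i; rewrite mxE.
pose a := Num.sqrt sx / t.
have fy : evalv f xc = evalv f (t *: (a *: w + u)).
  apply: Hinv.
  - rewrite scalerDr scalerA dot_lin // /a mulrC -mulrA mulVf // mulr1 sqr_sqrtr //.
    by rewrite Hsx subrK.
  - rewrite scalerDr scalerA dotDr dotZr (dotC u w) wu mulr0 add0r dotZr uu mulr1.
    by rewrite Ht.
have fy2 : evalv f (t *: (a *: w + u)) = t ^+ (2 * k) * P.[a].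
  rewrite lineP_eval /evalv -homog_scale //; apply: meval_eq => i.
  by rewrite !mxE.
have a2 : a ^+ 2 = sx / t ^+ 2 by rewrite /a expr_div_n sqr_sqrtr.
rewrite fx fy fy2 (even_sos a HPev HPq) a2.
rewrite big_cat /= !big_cons big_nil big_cat !big_map /=.
have HGv : forall q : {poly R}, (size q <= k.+1)%N ->
    (G q).@[x] = t ^+ k * (even_poly q).[sx / t ^+ 2].
  move=> q sq; rewrite /G hz_eval //.
  by have := size_even_poly q; move: sq; lia.
have HHv : forall q : {poly R}, (size q <= k.+1)%N -> forall l,
    (H q l).@[x] = (x l - u l 0 * t) * (t ^+ k.-1 * (odd_poly q).[sx / t ^+ 2]).
  move=> q sq l; rewrite /H mevalM mevalB mevalXU mevalZ hz_eval //.
  exact: nate (size_odd_poly q) sq.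
have Hsum : forall Z, \sum_(l < n) ((x l - u l 0 * t) * Z) ^+ 2 = sx * Z ^+ 2.
  move=> Z; rewrite Hsx2 /dot big_distrl /=; apply: eq_bigr => l _.
  by rewrite !mxE exprMn expr2 (mulrC t).
rewrite (eq_bigr _ (fun l _ => congr1 (fun z => z ^+ 2) (HHv q1 sq1 l))).
rewrite (eq_bigr _ (fun l _ => congr1 (fun z => z ^+ 2) (HHv q2 sq2 l))).
rewrite !Hsum !HGv //.
have [k0|kp] := posnP k.
  have sq1' : (size q1 <= 1)%N by move: sq1; rewrite k0.
  have sq2' : (size q2 <= 1)%N by move: sq2; rewrite k0.
  rewrite (Hodd0 q1 sq1') (Hodd0 q2 sq2') !horner0 k0 /= !expr0; ring.
move: (k.-1) (prednK kp) => k' <-.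
set E1 := (even_poly q1).[_]; set E2 := (even_poly q2).[_].
set O1 := (odd_poly q1).[_]; set O2 := (odd_poly q2).[_].
rewrite /= mulnC exprM !(exprS t k').
set tau := t ^+ k'.
by field.
Qed.
End Case3b.
Lemma natp s k : (s <= k.+1 -> 1 * s.-1 <= k)%N.
Proof. lia. Qed.

Section Cases.
Variable R : realType.

Lemma normalize n (z : 'cV[R]_n) : z != 0 ->
  dot ((Num.sqrt (dot z z))^-1 *: z) ((Num.sqrt (dot z z))^-1 *: z) = 1.
Proof.
move=> zn0; have dz : 0 < dot z z by rewrite lt_def dot_eq0 zn0 dot_ge0.
rewrite dotZl dotZr mulrA -expr2 exprVn sqr_sqrtr ?ltW // mulVf //.
by rewrite gt_eqF.
Qed.

Lemma HXi n (i : 'I_n) : ('X_i : {mpoly R[n]}) \is 1.-homog.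
Proof. by rewrite dhomogX; apply/eqP; exact: mdeg1. Qed.

Lemma case2 k (f : {mpoly R[2]}) : f \is (2 * k).-homog -> (forall x, 0 <= f.@[x]) ->
  sos_of_forms k f.
Proof.
move=> Hf Hnn.
pose wf (i : 'I_2) : R := (i == ord0)%:R.
pose uf (i : 'I_2) : R := (i == ord_max)%:R.
pose P := lineP f wf uf.
have HP0 : forall a, 0 <= P.[a] by move=> a; rewrite lineP_eval.
have sP : (size P <= (2 * k).+1)%N := lineP_size wf uf Hf.
have [q1 [q2 [HPq s1 s2]]] := sos2_gen (leqnn (size P)) HP0.
have sq1 : (size q1 <= k.+1)%N := natd s1 sP.
have sq2 : (size q2 <= k.+1)%N := natd s2 sP.
pose X0 : {mpoly R[2]} := 'X_ord0.
pose X1 : {mpoly R[2]} := 'X_ord_max.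
pose G q := hz q X0 X1 1 k.
exists [:: G q1; G q2]; split.
  move=> g; rewrite !inE => /orP [] /eqP ->; apply: hz_homog; rewrite ?HXi //.
  - exact: natp sq1.
  - exact: natp sq2.
have Tn0 : X1 != 0.
  apply/eqP => T0; have := congr1 (meval uf) T0; rewrite meval0 mevalXU /uf eqxx.
  by move=> /eqP; rewrite oner_eq0.
apply: (eval_sos_on Tn0) => x Tx.
set t := X1.@[x] in Tx *.
have Ht : t = x ord_max by rewrite /t mevalXU.
have Hx : f.@[x] = f.@[fun i => t * (x ord0 / t * wf i + uf i)].
  apply: meval_eq => i; rewrite /wf /uf.
  have : i = ord0 \/ i = ord_max.
    by case: i => [[|[|//]]] Hi; [left|right]; apply: val_inj.
  case=> ->; rewrite /= ?eqxx ?mulr1 ?mulr0 ?addr0 ?add0r ?Ht //.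
    by rewrite mulrC divfK // -Ht.
  by rewrite mulr1.
rewrite Hx (homog_scale _ _ Hf) -lineP_eval -/P HPq hornerD !horner_exp.
rewrite !big_cons big_nil addr0 /G !hz_eval //; try exact: natp sq2; try exact: natp sq1.
rewrite -/t /X0 mevalXU expr1 mulnC exprM.
by set tau := t ^+ k; ring.
Qed.

Lemma case1 k (f : {mpoly R[1]}) : f \is (2 * k).-homog -> (forall x, 0 <= f.@[x]) ->
  sos_of_forms k f.
Proof.
move=> Hf Hnn.
set c := f.@[fun _ => 1].
have c0 : 0 <= c := Hnn _.
exists [:: Num.sqrt c *: 'X_ord0 ^+ k]; split.
  move=> g; rewrite inE => /eqP ->; apply: rpredZ.
  by have := dhomogMn k (HXi (@ord0 0)); rewrite mul1n.
apply: eval_sos => x.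
have Hx : f.@[x] = f.@[fun i => x ord0 * 1].
  by apply: meval_eq => i; rewrite ord1 mulr1.
rewrite Hx (homog_scale _ _ Hf) big_cons big_nil addr0 mevalZ meval_exp mevalXU.
rewrite exprMn sqr_sqrtr // -exprM mulnC -/c; ring.
Qed.

Lemma case0 k (f : {mpoly R[0]}) : f \is (2 * k).-homog -> (forall x, 0 <= f.@[x]) ->
  sos_of_forms k f.
Proof.
move=> Hf Hnn.
have all0 : forall p : {mpoly R[0]}, p \is 0.-homog.
  move=> p; apply/dhomogP => m _; apply: (etrans (mdegE m)); exact: big_ord0.
set c := f.@[fun _ => 0].
have c0 : 0 <= c := Hnn _.
have Hx : forall x, f.@[x] = c by move=> x; apply: meval_eq => -[].
have [cz|cn0] := eqVneq c 0.
  exists [::]; split => //; apply: eval_sos => x.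
  by rewrite Hx cz big_nil.
have fn0 : f != 0 by apply: contraNneq cn0 => f0; rewrite /c f0 meval0.
have k0 : (2 * k = 0)%N := dhomog_uniq fn0 Hf (all0 f).
exists [:: (Num.sqrt c)%:MP]; split.
  move=> g; rewrite inE => /eqP ->.
  have -> : k = 0%N by move: k0; lia.
  exact: all0.
apply: eval_sos => x.
by rewrite Hx big_cons big_nil addr0 mevalC sqr_sqrtr.
Qed.
End Cases.
Unset Implicit Arguments.

Theorem lemma6p3 (R : realType) (n k : nat) (f : {mpoly R[n]}) (v : 'cV[R]_n) :
  is_form (2 * k) f ->
  (forall x : 'cV[R]_n, 0 <= evalv f x) ->
  (forall A : 'M[R]_n, A \in J v -> forall x : 'cV[R]_n, evalv f (A *m x) = evalv f x) ->
  sos_of_forms k f.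
Proof.
move=> Hf Hpos Hinv.
have Hnn : forall x : 'I_n -> R, 0 <= f.@[x].
  move=> x; have := Hpos (\col_i x i); rewrite /evalv.
  suff -> : f.@[fun i => (\col_i x i) i 0] = f.@[x] by [].
  by apply: meval_eq => i; rewrite mxE.
case: n f v Hf Hpos Hinv Hnn => [|[|[|n]]] f v Hf Hpos Hinv Hnn.
- exact: case0 Hf Hnn.
- exact: case1 Hf Hnn.
- exact: case2 Hf Hnn.
pose e0 : 'cV[R]_n.+3 := \col_i (i == ord0)%:R.
have e0n0 : e0 != 0.
  apply/eqP => /matrixP /(_ ord0 ord0); rewrite !mxE eqxx => /eqP.
  by rewrite oner_eq0.
pose z := if v == 0 then e0 else v.
have zn0 : z != 0 by rewrite /z; case: ifP => // /negbT.
pose u := (Num.sqrt (dot z z))^-1 *: z.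
have uu : dot u u = 1 := normalize zn0.
have HJ : forall A, SO A -> A *m u = u -> A \in J v.
  move=> A HA Au; rewrite unfold_in /J HA /=.
  have [->|vn0] := eqVneq v 0; first by rewrite mulmx0.
  have cn0 : (Num.sqrt (dot z z))^-1 != 0.
    by rewrite invr_eq0 sqrtr_eq0 -ltNge lt_def dot_eq0 zn0 dot_ge0.
  move: Au cn0; rewrite /u /z (negPf vn0) -scalemxAr => Au cn0.
  by rewrite (scalerI cn0 Au) eqxx.
have Hinv3 : forall x y, dot x x = dot y y -> dot u x = dot u y -> evalv f x = evalv f y.
  move=> x y Hxy Hu; have [A [HA Au Ax]] := rot_exists (u:=u) (isT : (2 < n.+3)%N) Hxy Hu.
  by rewrite -Ax Hinv //; apply: HJ.
have [w0 [w0n0 w0u _]] := perp_exists u u (isT : (2 < n.+3)%N).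
pose w := (Num.sqrt (dot w0 w0))^-1 *: w0.
have ww : dot w w = 1 := normalize w0n0.
have wu : dot w u = 0 by rewrite dotZl w0u mulr0.
exact: case3 Hf Hnn uu ww wu Hinv3.
Qed.
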